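(* Let $(X,\rho)$ be a metric space, $f\colon[0,\infty)\to[0,\infty)$ an unbounded modulus, $(A_i)\subset CL(X)$ and $A\in CL(X)$. Then $(A_i)$ is $f$-Wijsman statistically convergent to $A$ if and only if for each $x\in X$ there exists $K_x\subseteq\mathbb N$ such that $d^f(K_x)=0$ and $\lim_{i\to\infty,\ i\in\mathbb N\setminus K_x} d(x,A_i)=d(x,A)$.
   Context: A modulus is a function $f\colon[0,\infty)\to[0,\infty)$ such that $f(x)=0$ iff $x=0$, $f$ is subadditive, increasing and continuous. $CL(X)$ denotes the set of all non-empty closed subsets of $(X,\rho)$, and $d(x,B)=\inf_{y\in B}\rho(x,y)$. For an unbounded modulus $f$ and $K\subseteq\mathbb N$, the $f$-density is $d^f(K)=\lim_{n\to\infty}\frac{f(|\{k\le n:k\in K\}|)}{f(n)}$ (when the limit exists). A real sequence $(x_k)$ is $f$-statistically convergent to $l$ if for every $\varepsilon>0$ the set $\{k:|x_k-l|\ge\varepsilon\}$ has $f$-density $0$. $(A_i)$ is $f$-Wijsman statistically convergent to $A$ if for every $x\in X$ the sequence $(d(x,A_i))$ is $f$-statistically convergent to $d(x,A)$. *)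

(* Defs.v *)
From HB Require Import structures.
From mathcomp Require Import all_boot all_order all_algebra.
From mathcomp Require Import all_classical all_reals all_analysis.
Set Implicit Arguments. Unset Strict Implicit. Unset Printing Implicit Defensive.
Import Order.TTheory GRing.Theory Num.Theory numFieldNormedType.Exports.
Local Open Scope classical_set_scope.
Local Open Scope ring_scope.

Section Defs.
Variable R : realType.

Definition is_metric (X : Type) (rho : X -> X -> R) : Prop :=
  [/\ forall x y, 0 <= rho x y,
      forall x y, rho x y = 0 <-> x = y,
      forall x y, rho x y = rho y x &
      forall x y z, rho x z <= rho x y + rho y z].

Definition mclosed (X : Type) (rho : X -> X -> R) (B : set X) : Prop :=
  forall x, (forall e : R, 0 < e -> exists2 y, B y & rho x y < e) -> B x.

Definition in_CL (X : Type) (rho : X -> X -> R) (B : set X) : Prop :=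
  B !=set0 /\ mclosed rho B.

Definition dist_set (X : Type) (rho : X -> X -> R) (x : X) (B : set X) : R :=
  inf [set rho x y | y in B].

(* f : [0,oo) -> [0,oo) is a modulus (represented as f : R -> R, only its
   values on [0,oo) matter) *)
Definition modulus (f : R -> R) : Prop :=
  [/\ forall x, 0 <= x -> 0 <= f x,
      forall x, 0 <= x -> (f x = 0 <-> x = 0),
      forall x y, 0 <= x -> 0 <= y -> f (x + y) <= f x + f y,
      forall x y, 0 <= x -> x <= y -> f x <= f y &
      {within [set x : R | 0 <= x], continuous f}].

Definition unbounded_fun (f : R -> R) : Prop :=
  forall M : R, exists2 x, 0 <= x & M < f x.

Definition count_upto (K : set nat) (n : nat) : R :=
  (\sum_(k < n.+1) ((nat_of_ord k) \in K)%:R).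

Definition fdensity_zero (f : R -> R) (K : set nat) : Prop :=
  (fun n : nat => f (count_upto K n) / f n%:R) @ \oo --> (0 : R).

Definition fstat_cvg (f : R -> R) (u : nat -> R) (l : R) : Prop :=
  forall e : R, 0 < e -> fdensity_zero f [set k | e <= `|u k - l|].

Definition fWijsman_stat (X : Type) (rho : X -> X -> R) (f : R -> R)
  (A_ : nat -> set X) (A : set X) : Prop :=
  forall x : X, fstat_cvg f (fun i => dist_set rho x (A_ i)) (dist_set rho x A).

Definition lim_outside (K : set nat) (u : nat -> R) (l : R) : Prop :=
  forall e : R, 0 < e -> exists N : nat, forall i, (N <= i)%N -> ~ K i ->
    `|u i - l| < e.

End Defs.

(* Main.v *)
Require Import Defs.
From HB Require Import structures.
From mathcomp Require Import all_boot all_order all_algebra.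
From mathcomp Require Import all_classical all_reals all_analysis.
From mathcomp Require Import lra zify.
Import Order.TTheory GRing.Theory Num.Theory numFieldNormedType.Exports.
Local Open Scope classical_set_scope.
Local Open Scope ring_scope.

Fixpoint mkN (M : nat -> nat) (j : nat) : nat :=
  if j is j'.+1 then maxn (mkN M j').+1 (M j) else M 0%N.

Lemma mkN_lt M j : (mkN M j < mkN M j.+1)%N.
Proof. by rewrite /= leq_maxl. Qed.

Lemma mkN_ge M j : (M j <= mkN M j)%N.
Proof. by case: j => [|j] //=; rewrite leq_maxr. Qed.

Lemma mkN_mono M i j : (i <= j)%N -> (mkN M i <= mkN M j)%N.
Proof.
apply: (homo_leq (r := leq)) => //; [exact: leq_trans|].
by move=> k; apply: ltnW; apply: mkN_lt.
Qed.

Lemma mkN_find M i : (mkN M 0 <= i)%N ->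
  exists m, (mkN M m <= i)%N /\ (i < mkN M m.+1)%N.
Proof.
elim: i => [|i IH] h.
  exists 0%N; split => //; have := mkN_lt M 0; lia.
have [h0|h0] := leqP (mkN M 0) i.
  have [m [h1 h2]] := IH h0.
  have [h3|h3] := ltnP i.+1 (mkN M m.+1).
    by exists m; split => //; lia.
  exists m.+1; split; first lia.
  have := mkN_lt M m.+1; lia.
exists 0%N; split; first lia.
have := mkN_lt M 0; lia.
Qed.

Section Key.
Variables (R : realType) (f : R -> R).
Hypotheses (hf : modulus f) (hfu : unbounded_fun f).
Local Notation count_upto := (@count_upto R).

Lemma count_ge0 K n : 0 <= count_upto K n.
Proof. by rewrite /count_upto; apply: sumr_ge0 => i _; exact: ler0n. Qed.

Lemma count_le (K K' : set nat) n :
  (forall k, (k <= n)%N -> K k -> K' k) -> count_upto K n <= count_upto K' n.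
Proof.
move=> HK; rewrite /count_upto; apply: ler_sum => i _; rewrite ler_nat.
case: (boolP ((nat_of_ord i) \in K)) => // /set_mem Ki.
by rewrite mem_set //; apply: HK => //; rewrite -ltnS.
Qed.

Lemma sum_lt_min (N m : nat) :
  \sum_(k < m) (((nat_of_ord k) < N)%N)%:R = (minn m N)%:R :> R.
Proof.
elim: m => [|m IH]; first by rewrite big_ord0 min0n.
rewrite big_ord_recr /= IH -natrD; congr (_ %:R).
case: ltnP => h /=; lia.
Qed.

Lemma count_union (S K : set nat) (N n : nat) :
  (forall k, S k -> K k \/ (k < N)%N) ->
  count_upto S n <= count_upto K n + N%:R.
Proof.
move=> HS; rewrite /count_upto.
apply: le_trans (_ : \sum_(k < n.+1) (((nat_of_ord k) \in K)%:R
   + (((nat_of_ord k) < N)%N)%:R) <= _).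
  apply: ler_sum => i _; rewrite -natrD ler_nat.
  case: (boolP ((nat_of_ord i) \in S)) => // /set_mem /HS [/mem_set->//|->].
  by rewrite addn1.
rewrite big_split /= lerD2l sum_lt_min ler_nat; exact: geq_minr.
Qed.

Lemma key (u : nat -> R) (l : R) : fstat_cvg f u l <->
  exists K, fdensity_zero f K /\ lim_outside K u l.
Proof.
case: hf => f0 fz fsub fmono _.
have fn0 : forall n : nat, 0 <= f n%:R by move=> n; apply: f0.
split.
- move=> H.
  pose Kj (j : nat) := [set k | j.+1%:R^-1 <= `|u k - l|].
  have Hj : forall j, exists M, forall n, (M <= n)%N ->
      f (count_upto (Kj j) n) / f n%:R < j.+1%:R^-1.
    move=> j; have pos : 0 < j.+1%:R^-1 :> R by rewrite invr_gt0 ltr0n.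
    have := H _ pos; move/cvgrPdist_lt => /(_ _ pos) [M _ HM].
    exists M => n Mn.
    have := HM n Mn; rewrite /= sub0r normrN; apply: le_lt_trans; exact: ler_norm.
  have [M HM] := choice Hj.
  pose N := mkN M.
  have Kmono : forall i j k, (i <= j)%N -> Kj i k -> Kj j k.
    move=> i j k ij; rewrite /Kj /=; apply: le_trans.
    rewrite lef_pV2 ?posrE ?ltr0n // ler_nat; lia.
  have archi : forall e : R, 0 < e -> exists j, j.+1%:R^-1 < e.
    move=> e e0; have [j _ Hj'] := near_infty_natSinv_lt (PosNum e0).
    by exists j; apply: Hj'; rewrite /=.
  have mge : forall j m n, (N j <= n)%N -> (n < N m.+1)%N -> (j <= m)%N.
    move=> j m n h1 h2; rewrite leqNgt; apply/negP => mj.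
    have := @mkN_mono M _ _ mj; rewrite /N in h1 h2 *; lia.
  pose K := [set k | exists j, (N j <= k)%N /\ (k < N j.+1)%N /\ Kj j k].
  exists K; split.
  + apply/cvgrPdist_lt => eps eps0.
    have [j Hj'] := archi _ eps0.
    exists (N j) => // n /= Hn.
    have [m [h1 h2]] := @mkN_find M _ (leq_trans (@mkN_mono M _ _ (leq0n j)) Hn).
    have jm := mge _ _ _ Hn h2.
    rewrite sub0r normrN ger0_norm; last by apply: divr_ge0 => //; apply: f0; exact: count_ge0.
    apply: le_lt_trans (_ : f (count_upto (Kj m) n) / f n%:R < _).
      apply: ler_wpM2r; first by rewrite invr_ge0.
      apply: fmono; first exact: count_ge0.
      apply: count_le => k kn [i [i1 [i2 i3]]].
      apply: Kmono i3; rewrite leqNgt; apply/negP => mi.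
      have := @mkN_mono M _ _ mi; rewrite /N in i1 *; lia.
    apply: lt_trans Hj'; apply: lt_le_trans (HM m n _) _.
      exact: leq_trans (mkN_ge M m) h1.
    rewrite lef_pV2 ?posrE ?ltr0n // ler_nat; lia.
  + move=> e e0; have [j Hj'] := archi _ e0.
    exists (N j) => i Hi nK.
    have [m [h1 h2]] := @mkN_find M _ (leq_trans (@mkN_mono M _ _ (leq0n j)) Hi).
    have jm := mge _ _ _ Hi h2.
    have nKm : ~ Kj m i by move=> Km; apply: nK; exists m.
    apply: lt_le_trans (_ : m.+1%:R^-1 <= _); last first.
      apply: ltW; apply: le_lt_trans Hj'.
      rewrite lef_pV2 ?posrE ?ltr0n // ler_nat; lia.
    by rewrite ltNge; apply/negP => h; apply: nKm.
- move=> [K [HK HL]] e e0.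
  have [N HN] := HL e e0.
  pose S := [set k | e <= `|u k - l|].
  have HS : forall n, count_upto S n <= count_upto K n + N%:R.
    move=> n; apply: count_union => k /= Sk.
    case: (pselect (K k)) => [Kk|nKk]; [by left|right].
    rewrite ltnNge; apply/negP => Nk.
    by have := HN k Nk nKk; rewrite ltNge Sk.
  apply/cvgrPdist_lt => eps eps0.
  have e2 : 0 < eps / 2 by rewrite divr_gt0.
  have := HK; move/cvgrPdist_lt => /(_ _ e2) HK2.
  have [x x0 Hx] := hfu (f N%:R * 2 / eps).
  have HfN : \forall n \near \oo, f N%:R / f n%:R < eps / 2.
    near=> n.
    have xn : x <= n%:R by apply: ltW; near: n; exact: nbhs_infty_gtr.
    have fxn : f x <= f n%:R := fmono _ _ x0 xn.
    have fpos : 0 < f n%:R.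
      apply: (le_lt_trans _ (lt_le_trans Hx fxn)).
      by apply: divr_ge0; [apply: mulr_ge0 | apply: ltW].
    rewrite ltr_pdivrMr //.
    have : f N%:R * 2 / eps < f n%:R by apply: lt_le_trans fxn.
    rewrite ltr_pdivrMr // => h.
    have -> : eps / 2 * f n%:R = (f n%:R * eps) / 2 by rewrite mulrC mulrA.
    rewrite ltr_pdivlMr //; lra.
  near=> n.
  have HK3 : `|0 - f (count_upto K n) / f n%:R| < eps / 2 by near: n; exact: HK2.
  have HfN3 : f N%:R / f n%:R < eps / 2 by near: n; exact: HfN.
  rewrite sub0r normrN ger0_norm; last by apply: divr_ge0 => //; apply: f0; exact: count_ge0.
  move: HK3; rewrite sub0r normrN ger0_norm; last by apply: divr_ge0 => //; apply: f0; exact: count_ge0.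
  move=> HK3.
  apply: le_lt_trans (_ : f (count_upto K n) / f n%:R + f N%:R / f n%:R < _); last by lra.
  rewrite -mulrDl; apply: ler_wpM2r; first by rewrite invr_ge0.
  apply: le_trans (fsub _ _ (count_ge0 _ _) (ler0n _ _)).
  apply: fmono; first exact: count_ge0.
  exact: HS.
Unshelve. all: by end_near.
Qed.

End Key.

Theorem theorem2p10 (R : realType) (X : Type) (rho : X -> X -> R)
  (hrho : is_metric rho) (f : R -> R) (hf : modulus f) (hfu : unbounded_fun f)
  (A_ : nat -> set X) (A : set X)
  (hAi : forall i, in_CL rho (A_ i)) (hA : in_CL rho A) :
  fWijsman_stat rho f A_ A <->
  (forall x : X, exists K : set nat,
     fdensity_zero f K /\
     lim_outside K (fun i => dist_set rho x (A_ i)) (dist_set rho x A)).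
Proof.
split => H x; [exact: (proj1 (@key R f hf hfu _ _) (H x)) | exact: (proj2 (@key R f hf hfu _ _) (H x))].
Qed.
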